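(* Let $f=a_0+ a_{1}z+\cdots+a_m z^m\in \mathbb{Z}[z]$ be primitive (the greatest common divisor of its coefficients is $1$). Suppose there exists a positive real number $\alpha$ such that \[ |a_m| \alpha^m>|a_0|+|a_1|\alpha+\cdots+|a_{m-1}|\alpha^{m-1}. \] If there exist natural numbers $n$ and $d$ with $n\geq \alpha+ d$ such that either $|f(n)|/d$ is a prime, or $|f(n)|/d$ is a prime power coprime to $|f'(n)|$, then $f$ is irreducible in $\mathbb{Z}[z]$.
   Context: $f'$ denotes the derivative of $f$. Natural numbers are positive integers. *)

(* Defs.v *)
From HB Require Import structures.
From mathcomp Require Import all_boot all_order all_algebra.
From mathcomp Require Import reals.
Set Implicit Arguments. Unset Strict Implicit. Unset Printing Implicit Defensive.
Import Order.TTheory GRing.Theory Num.Theory.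
Local Open Scope ring_scope.

Definition primitive_intpoly (f : {poly int}) : Prop :=
  \big[gcdn/0%N]_(i < size f) absz (f`_i) = 1%N.

Definition irreducible_in_Zz (f : {poly int}) : Prop :=
  f != 0 /\ f \isn't a GRing.unit /\
  forall g h : {poly int}, f = g * h -> g \is a GRing.unit \/ h \is a GRing.unit.

Definition prime_power (q : nat) : Prop :=
  exists p k : nat, prime p /\ (0 < k)%N /\ q = (p ^ k)%N.

(* Main.v *)
Require Import Defs.
From HB Require Import structures.
From mathcomp Require Import all_boot all_order all_algebra.
From mathcomp Require Import reals.
From mathcomp Require Import complex zify.
Import Order.TTheory GRing.Theory Num.Theory.
Local Open Scope ring_scope.

Lemma root_bound (C : numDomainType) (f : {poly int}) (a z : C) :
  0 < a ->
  \sum_(i < (size f).-1) (`|f`_i|)%:~R * a ^+ i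
    < (`|lead_coef f|)%:~R * a ^+ (size f).-1 ->
  root (map_poly intr f) z -> `|z| < a.
Proof.
move=> a0 H rz.
have f0 : f != 0.
  apply/eqP=> f0; move: H; rewrite f0 size_poly0 big_ord0 lead_coef0 /=.
  by rewrite normr0 mul0r ltxx.
set m := (size f).-1 in H.
have sf : size f = m.+1 by rewrite prednK // size_poly_gt0.
rewrite real_ltNge ?normr_real ?gtr0_real //.
apply/negP => az.
set t := `|z| in az.
have t0 : 0 < t by apply: lt_le_trans az.
move: rz; rewrite /root horner_coef size_map_inj_poly; last 2 first.
- exact: intr_inj.
- by rewrite mulr0z.
rewrite sf big_ord_recr /= coef_map /= => /eqP E.
have E1 : (f`_m)%:~R * z ^+ m = - \sum_(i < m) (map_poly intr f)`_i * z ^+ i.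
  by apply/eqP; rewrite -addr_eq0 addrC E.
have N1 : (`|lead_coef f|)%:~R * t ^+ m <= \sum_(i < m) (`|f`_i|)%:~R * t ^+ i.
  rewrite lead_coefE sf /= intr_norm /t -normrX -normrM E1 normrN.
  apply: le_trans (ler_norm_sum _ _ _) _; apply: ler_sum => i _.
  by rewrite coef_map /= normrM normrX intr_norm.
have N2 : (\sum_(i < m) (`|f`_i|)%:~R * t ^+ i) * a ^+ m <=
          (\sum_(i < m) (`|f`_i|)%:~R * a ^+ i) * t ^+ m.
  rewrite !mulr_suml; apply: ler_sum => -[i /= /ltnW im] _.
  rewrite -(subnKC im) !exprD -!mulrA ler_wpM2l ?ler0z ?normr_ge0 //.
  have a0' : 0 <= a by apply: ltW.
  rewrite mulrCA ler_wpM2l ?exprn_ge0 //.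
  rewrite ler_wpM2l ?exprn_ge0 ?normr_ge0 //.
  by apply: lerXn2r; rewrite ?nnegrE ?normr_ge0.

have N3 : (\sum_(i < m) (`|f`_i|)%:~R * a ^+ i) * t ^+ m <
          ((`|lead_coef f|)%:~R * a ^+ m) * t ^+ m.
  by rewrite ltr_pM2r ?exprn_gt0.
have am0 : 0 <= a ^+ m by rewrite exprn_ge0 // ltW.
have := le_lt_trans (le_trans (ler_wpM2r am0 N1) N2) N3.
by rewrite mulrAC ltxx.
Qed.
Lemma prod_gt (C : numDomainType) (s : seq C) (D : C) :
  1 <= D -> (forall y, y \in s -> D < y) ->
  (1 <= \prod_(y <- s) y) /\ (s != [::] -> D < \prod_(y <- s) y).
Proof.
move=> D1; elim: s => [|y s IH] Hs; first by rewrite big_nil lexx.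
have [P1 _] := IH (fun z zs => Hs z (mem_behead (s:=y :: s) zs)).
have Dy : D < y by apply: Hs; rewrite mem_head.
have y1 : 1 <= y by apply: ltW; apply: le_lt_trans Dy.
have yP : y <= y * \prod_(z <- s) z by apply: ler_peMr => //; apply: le_trans y1.
rewrite big_cons; split => [|_]; first by apply: le_trans yP.
by apply: lt_le_trans yP.
Qed.

Lemma factor_bound (C : numClosedFieldType) (p : {poly C}) (x D : C) :
  (1 < size p)%N -> 1 <= `|lead_coef p| -> 1 <= D ->
  (forall z, root p z -> D < `|x - z|) -> D < `|p.[x]|.
Proof.
move=> sp lc1 D1 Hr.
have p0 : p != 0 by rewrite -size_poly_gt0 ltnW.
have l0 : lead_coef p != 0 by rewrite lead_coef_eq0.
have [r Er] := closed_field_poly_normal p.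
have sr : size r != 0%N.
  by move: sp; rewrite Er size_scale // size_prod_XsubC; case: r {Er}.
have rr : forall z, z \in r -> root p z.
  by move=> z zr; rewrite Er rootZ // root_prod_XsubC.
rewrite Er hornerZ normrM horner_prod normr_prod.
under eq_bigr do rewrite hornerXsubC.
rewrite -(big_map (fun z => `|x - z|) xpredT id).
have H : forall y, y \in [seq `|x - z| | z <- r] -> D < y.
  by move=> y /mapP [z zr ->]; apply: Hr; apply: rr.
have [P1 P2] := @prod_gt _ _ _ D1 H.
move: P1 P2; set P := \prod_(_ <- _) _ => P1 P2.
have DP : D < P by apply: P2; rewrite -size_eq0 size_map.
apply: lt_le_trans DP _; apply: ler_peMl => //; apply: le_trans P1.
by rewrite ler01.
Qed.

Lemma value_bound (C : numClosedFieldType) (f g h : {poly int}) (a : C)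
  (n d : nat) :
  0 < a ->
  \sum_(i < (size f).-1) (`|f`_i|)%:~R * a ^+ i
    < (`|lead_coef f|)%:~R * a ^+ (size f).-1 ->
  (0 < d)%N -> a + d%:R <= n%:R -> f = g * h -> (1 < size g)%N ->
  (d < `|g.[n%:Z]|)%N.
Proof.
move=> a0 H d0 adn fgh sg.
have g0 : g != 0 by rewrite -size_poly_gt0 ltnW.
have lt : d%:R < `|(map_poly (intr : int -> C) g).[n%:R]|.
  apply: factor_bound.
  - rewrite size_map_inj_poly ?mulr0z //; exact: intr_inj.
  - rewrite lead_coef_map_inj //; last exact: intr_inj.
    by rewrite -intr_norm -natr_absz ler1n absz_gt0 lead_coef_eq0.
  - move: d0; rewrite -(ler1n C) => h1; exact: h1.
  move=> z rz.
  have rf : root (map_poly (intr : int -> C) f) z.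
    by rewrite fgh rmorphM rootM rz.
  have za := @root_bound _ _ _ _ a0 H rf.
  apply: lt_le_trans (lerB_dist _ _).
  rewrite normr_nat ltrBrDr.
  apply: lt_le_trans adn.
  by rewrite (addrC a) ltrD2l.
rewrite (_ : (n%:R : C) = intr (n%:Z)) // horner_map /= -intr_norm -natr_absz ltr_nat in lt.
exact: lt.
Qed.
Lemma natc (G H d q : nat) : (0 < q)%N -> (d < G)%N -> (d < H)%N -> (G * H = d * q)%N -> (q %| G)%N -> False.
Proof. move=> q0 dG dH E /dvdnP [k Ek]. subst G.
have kH : (k * H = d)%N by apply/eqP; rewrite -(eqn_pmul2r q0) mulnAC E.
have k0 : (0 < k)%N by rewrite lt0n; apply/eqP => k0; move: dG; rewrite k0 mul0n.
have : (H <= k * H)%N by rewrite leq_pmull.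
lia. Qed.

Lemma const_unit (f g h : {poly int}) :
  primitive_intpoly f -> f = g * h -> (size g <= 1)%N -> g \is a GRing.unit.
Proof.
move=> prim fgh sg.
set c := g`_0.
have Eg : g = c%:P by apply: size1_polyC.
have : dvdn (absz c) (\big[gcdn/0%N]_(i < size f) absz (f`_i)).
  apply: (big_ind (fun x => dvdn (absz c) x)) => // [x y hx hy|i _]; first by rewrite dvdn_gcd hx hy.
  move: (nat_of_ord i) => j.
  by rewrite fgh Eg coefCM abszM dvdn_mulr.
rewrite prim dvdn1 => /eqP c1.
have cc : c * c = 1.
  have : `|c| ^+ 2 = c ^+ 2 by rewrite real_normK ?num_real.
  by rewrite -abszE c1 expr1n expr2 => <-.
rewrite Eg poly_unitE size_polyC coefC /=.
have -> : c != 0 by apply/eqP => c0; move: c1; rewrite c0.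
by apply/unitrPr; exists c.
Qed.

Theorem corollary4 (R : realType) (f : {poly int}) (alpha : R) (n d : nat) :
  primitive_intpoly f ->
  0 < alpha ->
  \sum_(i < (size f).-1) (`|f`_i|)%:~R * alpha ^+ i
    < (`|lead_coef f|)%:~R * alpha ^+ (size f).-1 ->
  (0 < n)%N -> (0 < d)%N ->
  alpha + d%:R <= n%:R ->
  ((exists p : nat, prime p /\ `|f.[n%:Z]|%N = (d * p)%N) \/
   (exists q : nat, prime_power q /\ `|f.[n%:Z]|%N = (d * q)%N /\
                    coprime q `|(f^`()).[n%:Z]|%N)) ->
  irreducible_in_Zz f.
Proof.
move=> prim a0 H n0 d0 adn Hval.
have a0C : 0 < (alpha%:C)%C :> R[i] by rewrite -(rmorph0 (real_complex R)) ltcR.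
have HC : \sum_(i < (size f).-1) (`|f`_i|)%:~R * (alpha%:C)%C ^+ i
    < (`|lead_coef f|)%:~R * (alpha%:C)%C ^+ (size f).-1 :> R[i].
  move: H; rewrite -ltcR rmorph_sum rmorphM rmorphXn rmorph_int.
  by under eq_bigr do rewrite rmorphM rmorphXn rmorph_int.
have adnC : (alpha%:C)%C + d%:R <= n%:R :> R[i].
  by move: adn; rewrite -lecR rmorphD !rmorph_nat.
have f0 : f != 0.
  apply/eqP => f0; move: prim; rewrite /primitive_intpoly f0 size_poly0.
  by rewrite big_ord0.
have Fgt1 : (1 < `|f.[n%:Z]|)%N.
  case: Hval => [[p [pp ->]]|[q [[p [k [pp [k0 ->]]] [-> _]]]]].
    by apply: (leq_trans (prime_gt1 pp)); rewrite leq_pmull.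
  apply: (leq_trans (prime_gt1 pp)); apply: (leq_trans _ (leq_pmull _ d0)).
  by rewrite -{1}(expn1 p) leq_pexp2l // prime_gt0.
split; [by [] | split].
  apply/negP => /unitrPr [u fu].
  have : `|(f * u).[n%:Z]|%N = 1%N by rewrite fu hornerC.
  rewrite hornerM abszM => /eqP; rewrite muln_eq1 => /andP [/eqP F1 _].
  by move: Fgt1; rewrite F1.
move=> g h fgh.
case: (leqP (size g) 1) => sg; first by left; apply: const_unit fgh sg.
case: (leqP (size h) 1) => sh.
  by right; apply: (@const_unit f h g prim _ sh); rewrite mulrC.
exfalso.
have Gd := @value_bound _ _ _ _ _ _ _ a0C HC d0 adnC fgh sg.
have fhg : f = h * g by rewrite mulrC.
have Hd := @value_bound _ _ _ _ _ _ _ a0C HC d0 adnC fhg sh.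
have EF : `|f.[n%:Z]|%N = (`|g.[n%:Z]| * `|h.[n%:Z]|)%N by rewrite fgh hornerM abszM.
move: Gd Hd; set G := `|g.[n%:Z]|%N; set Hh := `|h.[n%:Z]|%N => Gd Hd.
case: Hval => [[p [pp Ep]]|[q [[p [k [pp [k0 Eq]]] [Ep cop]]]]].
  have E : (G * Hh = d * p)%N by rewrite -EF.
  have : (p %| G * Hh)%N by rewrite E dvdn_mull.
  rewrite Euclid_dvdM // => /orP [pG|pH].
    exact: (natc G Hh d p (prime_gt0 pp) Gd Hd E pG).
  by apply: (natc Hh G d p (prime_gt0 pp) Hd Gd _ pH); rewrite mulnC.
have E : (G * Hh = d * q)%N by rewrite -EF.
have q0 : (0 < q)%N by rewrite Eq expn_gt0 prime_gt0.
have qGH : (q %| G * Hh)%N by rewrite E dvdn_mull.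
have [pG|npG] := boolP (p %| G)%N; last first.
  have cq : coprime q G by rewrite Eq coprimeXl // prime_coprime.
  rewrite mulnC Gauss_dvdl // in qGH.
  by apply: (natc Hh G d q q0 Hd Gd _ qGH); rewrite mulnC.
have [pH|npH] := boolP (p %| Hh)%N; last first.
  have cq : coprime q Hh by rewrite Eq coprimeXl // prime_coprime.
  rewrite Gauss_dvdl // in qGH.
  exact: (natc G Hh d q q0 Gd Hd E qGH).
have pF : (p %| `|(f^`()).[n%:Z]|)%N.
  have pGz : (p%:Z %| g.[n%:Z])%Z by rewrite dvdzE absz_nat.
  have pHz : (p%:Z %| h.[n%:Z])%Z by rewrite dvdzE absz_nat.
  have : (p%:Z %| (f^`()).[n%:Z])%Z.
    rewrite fgh derivM hornerD !hornerM.
    by apply: rpredD; [apply: dvdz_mull | apply: dvdz_mulr].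
  by rewrite dvdzE absz_nat.
have : coprime p `|(f^`()).[n%:Z]|%N.
  apply: coprime_dvdl cop; rewrite Eq; exact: dvdn_exp (dvdnn p).
by rewrite prime_coprime // pF.
Qed.
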